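(* Let $n\ge1$ and $\gamma\in[0,1]$. Define $\mathcal Q_n^\gamma=\{(\mathbf q_0,\mathbf q_1)\mid \mathbf q_i\in\{0,1\}^n,\ \mathcal W(\mathbf q_i)\le\gamma n\text{ for } i=0,1\}$, where $\mathcal W$ denotes Hamming weight. For $a\in\{0,1\}$ let $\lvert \hat a\rangle=\frac{1}{\sqrt2}(\lvert 0\rangle+(-1)^a\lvert 1\rangle)$; for bits $r_0,r_1,s$ let $\lvert\psi^{s}_{r_0r_1}\rangle_{A_0A_1}=\lvert r_0\rangle_{A_s}\otimes\lvert \hat r_1\rangle_{A_{\bar s}}$; and for $\mathbf r_0,\mathbf r_1,\mathbf s\in\{0,1\}^n$ let $\lvert\Psi^{\mathbf s}_{\mathbf r_0\mathbf r_1}\rangle_A=\bigotimes_{j=1}^n\lvert\psi^{s^j}_{r_0^jr_1^j}\rangle_{A_0^jA_1^j}$. Consider any strategy consisting of a finite-dimensional ancilla $E$ in a pure state $\lvert\chi\rangle_E$, a unitary $U$ on $AE=B_0B_1B'$ (finite-dimensional subsystems), a projective measurement $\{R^{b'}\}_{b'\in\{0,1\}}$ on $B'$, and for each $i\in\{0,1\}$, $\mathbf s\in\{0,1\}^n$, $b'\in\{0,1\}$ a projective measurement $\{\Pi^{\mathbf e}_{i\mathbf s b'}\}_{\mathbf e\in\{0,1\}^n}$ on $B_i$. Let $\lvert\Phi^{\mathbf s}_{\mathbf r_0\mathbf r_1}\rangle=U(\lvert\Psi^{\mathbf s}_{\mathbf r_0\mathbf r_1}\rangle\otimes\lvert\chi\rangle)$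 and $$p_n^\gamma=\frac{1}{2^{3n}}\sum_{(\mathbf q_0,\mathbf q_1)\in\mathcal Q_n^\gamma}\ \sum_{\mathbf r_0,\mathbf r_1,\mathbf s}\sum_{b'}\langle\Phi^{\mathbf s}_{\mathbf r_0\mathbf r_1}\rvert\,\Pi^{\mathbf r_{b'}\oplus\mathbf q_0}_{0\mathbf s b'}\otimes\Pi^{\mathbf r_{\bar b'}\oplus\mathbf q_1}_{1\mathbf s b'}\otimes R^{b'}\,\lvert\Phi^{\mathbf s}_{\mathbf r_0\mathbf r_1}\rangle.$$ Then $$p_n^\gamma\le\bigl\lvert\mathcal Q_n^\gamma\bigr\rvert\Bigl(\frac12+\frac{1}{2\sqrt2}\Bigr)^n.$$
   Context: $p_n^\gamma$ is the probability that both Bob's outputs (from $B_0$ and from $B_1$) are within Hamming distance $\gamma n$ of $\mathbf r_{b'}$ and $\mathbf r_{\bar b'}$ respectively, for uniformly random $\mathbf r_0,\mathbf r_1,\mathbf s$; $\bar b'=b'\oplus1$ and $\oplus$ is bitwise addition modulo 2. *)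

(* Defs.v *)
(* Quantum states/operators are represented by their
   coordinates in a fixed orthonormal (computational) basis indexed by a
   finType: a vector on a system with basis I is a function I -> C, an
   operator from system J to system I is a function I -> J -> C (matrix
   entries), and tensor products correspond to product index types with
   products of amplitudes / matrix entries. *)
From HB Require Import structures.
From mathcomp Require Import all_boot all_order all_algebra.
Set Implicit Arguments. Unset Strict Implicit. Unset Printing Implicit Defensive.
Import Order.TTheory GRing.Theory Num.Theory.
Local Open Scope ring_scope.

Section Quantum.
Variable C : numClosedFieldType.

Definition bits (n : nat) := {ffun 'I_n -> bool}.

Definition hw n (q : bits n) : nat := #|[set j | q j]|.

Definition bxor n (r q : bits n) : bits n := [ffun j => r j (+) q j].

Definition Qset n (gamma : C) : {set bits n * bits n} :=
  [set q : bits n * bits n |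
     ((hw q.1)%:R <= gamma * n%:R) && ((hw q.2)%:R <= gamma * n%:R)].

Definition ket (r : bool) : bool -> C := fun a => if a == r then 1 else 0.

Definition ket_hat (r : bool) : bool -> C :=
  fun a => (sqrtC 2)^-1 * (if a then (-1) ^+ r else 1).

(* |psi^s_{r0 r1}>_{A0 A1} = |r0>_{A_s} (x) |r1^>_{A_{not s}};
   basis of A0A1 indexed by (a0, a1) : bool * bool *)
Definition psi (s r0 r1 : bool) : bool * bool -> C :=
  fun a => if s then ket_hat r1 a.1 * ket r0 a.2
           else ket r0 a.1 * ket_hat r1 a.2.

Definition Abasis (n : nat) := {ffun 'I_n -> bool * bool}.

Definition Psi n (s r0 r1 : bits n) : Abasis n -> C :=
  fun x => \prod_(j < n) psi (s j) (r0 j) (r1 j) (x j).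

Definition unitary (I K : finType) (U : K -> I -> C) : Prop :=
  (forall i i' : I, \sum_(k : K) (U k i)^* * U k i' = (i == i')%:R) /\
  (forall k k' : K, \sum_(i : I) U k i * (U k' i)^* = (k == k')%:R).

Definition pure_state (I : finType) (v : I -> C) : Prop :=
  \sum_(i : I) (v i)^* * v i = 1.

Definition proj_meas (O B : finType) (P : O -> B -> B -> C) : Prop :=
  (forall o (b b' : B), (P o b b')^* = P o b' b) /\
  (forall o (b b' : B), \sum_(c : B) P o b c * P o c b' = P o b b') /\
  (forall (b b' : B), \sum_(o : O) P o b b' = (b == b')%:R).

Definition Phi n (E B0 B1 B' : finType)
  (U : (B0 * B1 * B') -> (Abasis n * E) -> C) (chi : E -> C)
  (s r0 r1 : bits n) : B0 * B1 * B' -> C :=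
  fun k => \sum_(x : Abasis n * E) U k x * (Psi s r0 r1 x.1 * chi x.2).

Definition expect3 (B0 B1 B' : finType) (v : B0 * B1 * B' -> C)
  (P0 : B0 -> B0 -> C) (P1 : B1 -> B1 -> C) (R : B' -> B' -> C) : C :=
  \sum_(k : B0 * B1 * B') \sum_(k' : B0 * B1 * B')
     (v k)^* * (P0 k.1.1 k'.1.1 * P1 k.1.2 k'.1.2 * R k.2 k'.2) * v k'.

(* p_n^gamma ; Pi0 e s b' is Pi^e_{0 s b'}, Pi1 e s b' is Pi^e_{1 s b'} *)
Definition p_win n (gamma : C) (E B0 B1 B' : finType)
  (U : (B0 * B1 * B') -> (Abasis n * E) -> C) (chi : E -> C)
  (R : bool -> B' -> B' -> C)
  (Pi0 : bits n -> bits n -> bool -> B0 -> B0 -> C)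
  (Pi1 : bits n -> bits n -> bool -> B1 -> B1 -> C) : C :=
  (2%:R ^+ (3 * n))^-1 *
  \sum_(q in Qset n gamma) \sum_(r0 : bits n) \sum_(r1 : bits n)
  \sum_(s : bits n) \sum_(b' : bool)
    expect3 (Phi U chi s r0 r1)
      (Pi0 (bxor (if b' then r1 else r0) q.1) s b')
      (Pi1 (bxor (if b' then r0 else r1) q.2) s b')
      (R b').

End Quantum.

(* Main.v *)
Require Import Defs.
From HB Require Import structures.
From mathcomp Require Import all_boot all_order all_algebra.
From mathcomp Require Import ring lra.
Import Order.TTheory GRing.Theory Num.Theory.
Local Open Scope ring_scope.
Set Implicit Arguments. Unset Strict Implicit. Unset Printing Implicit Defensive.

Section Gen.
Variable C : numClosedFieldType.

Lemma sqn_ge0 (x : C) : 0 <= x^* * x.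
Proof. by rewrite -normCKC exprn_ge0. Qed.

Lemma sum_sqn_ge0 (I : finType) (f : I -> C) : 0 <= \sum_i (f i)^* * f i.
Proof. by apply: sumr_ge0 => i _; apply: sqn_ge0. Qed.

Lemma CS (I : finType) (f g : I -> C) :
  `|\sum_i (f i)^* * g i| ^+ 2 <= (\sum_i (f i)^* * f i) * (\sum_i (g i)^* * g i).
Proof.
set z := \sum_i (f i)^* * g i; set A := \sum_i (f i)^* * f i; set B := \sum_i (g i)^* * g i.
have A0 : 0 <= A by apply: sum_sqn_ge0.
have B0 : 0 <= B by apply: sum_sqn_ge0.
have Ar : A^* = A by apply: geC0_conj.
have zc : \sum_i (g i)^* * f i = z^*.
  by rewrite /z rmorph_sum; apply: eq_bigr => i _; rewrite rmorphM /= conjCK mulrC.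
have [Az|Apos] := eqVneq A 0.
  have f0 : forall i, f i = 0.
    move=> i; move/eqP: Az; rewrite psumr_eq0; last by move=> j _; apply: sqn_ge0.
    move/allP => /(_ i (mem_index_enum i)) /=.
    by rewrite -normCKC sqrf_eq0 normr_eq0 => /eqP.
  have -> : z = 0 by rewrite /z big1 // => i _; rewrite f0 rmorph0 mul0r.
  by rewrite Az normr0 expr0n /= mul0r.
have Agt : 0 < A by rewrite lt_def Apos A0.
have E : \sum_i (A * g i - z * f i)^* * (A * g i - z * f i) = A * (A * B - z * z^*).
  transitivity (\sum_i (A * A * ((g i)^* * g i) - A * z * ((g i)^* * f i)
       - A * z^* * ((f i)^* * g i) + z * z^* * ((f i)^* * f i))).
    by apply: eq_bigr => i _; rewrite rmorphB !rmorphM /= Ar; ring.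
  rewrite !big_split /= !sumrN -!mulr_sumr zc -/A -/B -/z; ring.
have : 0 <= A * (A * B - z * z^*) by rewrite -E; apply: sum_sqn_ge0.
rewrite pmulr_rge0 // subr_ge0 => H.
by rewrite normCK.
Qed.


Definition dotv (I : finType) (u v : I -> C) := \sum_i (u i)^* * v i.
Definition app (I : finType) (M : I -> I -> C) (v : I -> C) : I -> C :=
  fun i => \sum_j M i j * v j.
Definition mulM (I : finType) (M N : I -> I -> C) : I -> I -> C :=
  fun i k => \sum_j M i j * N j k.
Definition idM (I : finType) : I -> I -> C := fun i j => (i == j)%:R.
Arguments idM {I}.
Definition herm (I : finType) (M : I -> I -> C) := forall i j, (M i j)^* = M j i.
Definition isproj (I : finType) (M : I -> I -> C) :=
  herm M /\ forall i k, mulM M M i k = M i k.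

Lemma dotv_ge0 (I : finType) (u : I -> C) : 0 <= dotv u u.
Proof. exact: sum_sqn_ge0. Qed.

Lemma app_app (I : finType) (M N : I -> I -> C) v i :
  app M (app N v) i = app (mulM M N) v i.
Proof.
rewrite /app /mulM.
under eq_bigr do rewrite mulr_sumr.
rewrite exchange_big /=; apply: eq_bigr => k _.
by rewrite mulr_suml; apply: eq_bigr => j _; rewrite mulrA.
Qed.

Lemma dot_herm (I : finType) (M : I -> I -> C) u w :
  herm M -> dotv u (app M w) = dotv (app M u) w.
Proof.
move=> hM; rewrite /dotv /app.
under eq_bigr do rewrite mulr_sumr.
rewrite exchange_big /=; apply: eq_bigr => k _.
rewrite rmorph_sum mulr_suml; apply: eq_bigr => j _.
by rewrite rmorphM /= hM mulrCA !mulrA.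
Qed.

Lemma app_idem (I : finType) (M : I -> I -> C) v i :
  isproj M -> app M (app M v) i = app M v i.
Proof.
move=> [_ hM]; rewrite app_app /app; apply: eq_bigr => j _; by rewrite hM.
Qed.

Lemma dot_proj (I : finType) (M : I -> I -> C) v :
  isproj M -> dotv v (app M v) = dotv (app M v) (app M v).
Proof.
move=> hM; rewrite -dot_herm; last by case: hM.
by apply: eq_bigr => i _; rewrite app_idem.
Qed.

Lemma dotv_sumr (I J : finType) (u : I -> C) (w : J -> I -> C) :
  dotv u (fun i => \sum_j w j i) = \sum_j dotv u (w j).
Proof.
rewrite /dotv; under eq_bigr do rewrite mulr_sumr.
by rewrite exchange_big.
Qed.

Lemma dotv_suml (I J : finType) (u : J -> I -> C) (w : I -> C) :
  dotv (fun i => \sum_j u j i) w = \sum_j dotv (u j) w.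
Proof.
rewrite /dotv; under eq_bigr do rewrite rmorph_sum mulr_suml.
by rewrite exchange_big.
Qed.

Lemma app_sumM (I J : finType) (P : J -> I -> I -> C) v i :
  app (fun a b => \sum_j P j a b) v i = \sum_j app (P j) v i.
Proof.
rewrite /app; under eq_bigr do rewrite mulr_suml.
by rewrite exchange_big.
Qed.

Lemma app_idM (I : finType) v (i : I) : app (@idM I) v i = v i.
Proof.
rewrite /app /idM (bigD1 i) //= eqxx mul1r big1 ?addr0 // => j /negbTE.
by rewrite eq_sym => ->; rewrite mul0r.
Qed.

Lemma gram_diag (I J : finType) (M : J -> I -> C) (a : I -> C) :
  (forall i i', i != i' -> \sum_j (M j i)^* * M j i' = 0) ->
  \sum_j (\sum_i M j i * a i)^* * (\sum_i M j i * a i) =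
  \sum_i (\sum_j (M j i)^* * M j i) * ((a i)^* * a i).
Proof.
move=> H.
transitivity (\sum_j \sum_i \sum_i' ((M j i)^* * M j i') * ((a i)^* * a i')).
  apply: eq_bigr => j _; rewrite rmorph_sum mulr_suml; apply: eq_bigr => i _.
  rewrite mulr_sumr; apply: eq_bigr => i' _; rewrite rmorphM /=; ring.
rewrite exchange_big /=; apply: eq_bigr => i _.
rewrite exchange_big /=.
rewrite (bigD1 i) //= [X in _ + X]big1 ?addr0.
  by rewrite -mulr_suml.
by move=> i' hii; rewrite -mulr_suml (H i i') ?mul0r // eq_sym.
Qed.

Lemma sum_pair (I J : finType) (F : I * J -> C) :
  \sum_(p : I * J) F p = \sum_i \sum_j F (i, j).
Proof. by rewrite pair_bigA; apply: eq_bigr => -[]. Qed.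

Section Tens.
Variables (B0 B1 B2 : finType).
Definition tens3 (P0 : B0 -> B0 -> C) (P1 : B1 -> B1 -> C) (P2 : B2 -> B2 -> C)
  : B0 * B1 * B2 -> B0 * B1 * B2 -> C :=
  fun k k' => P0 k.1.1 k'.1.1 * P1 k.1.2 k'.1.2 * P2 k.2 k'.2.

Lemma mulM_tens3 P0 P1 P2 Q0 Q1 Q2 k k' :
  mulM (tens3 P0 P1 P2) (tens3 Q0 Q1 Q2) k k' =
  tens3 (mulM P0 Q0) (mulM P1 Q1) (mulM P2 Q2) k k'.
Proof.
rewrite /mulM /tens3 sum_pair.
rewrite (eq_bigr (fun a => \sum_c (P0 k.1.1 a.1 * Q0 a.1 k'.1.1) * (P1 k.1.2 a.2 * Q1 a.2 k'.1.2) * (P2 k.2 c * Q2 c k'.2))); last first.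
  by move=> a _; apply: eq_bigr => c _ /=; ring.
under eq_bigr do rewrite -big_distrr /=.
rewrite -big_distrl /=; congr (_ * _).
rewrite sum_pair /= big_distrl /=; apply: eq_bigr => a _.
by rewrite big_distrr.
Qed.

Lemma herm_tens3 P0 P1 P2 : herm P0 -> herm P1 -> herm P2 -> herm (tens3 P0 P1 P2).
Proof. by move=> h0 h1 h2 k k'; rewrite /tens3 !rmorphM /= h0 h1 h2. Qed.

Lemma isproj_tens3 P0 P1 P2 :
  isproj P0 -> isproj P1 -> isproj P2 -> isproj (tens3 P0 P1 P2).
Proof.
move=> [h0 i0] [h1 i1] [h2 i2]; split; first exact: herm_tens3.
by move=> k k'; rewrite mulM_tens3 /tens3 i0 i1 i2.
Qed.

Lemma tens3_sum1 (O : finType) P0 (P : O -> B1 -> B1 -> C) P2 k k' :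
  tens3 P0 (fun a b => \sum_o P o a b) P2 k k' = \sum_o tens3 P0 (P o) P2 k k'.
Proof. by rewrite /tens3 mulr_sumr mulr_suml; apply: eq_bigr => o _; ring. Qed.

Lemma tens3_sum0 (O : finType) (P : O -> B0 -> B0 -> C) P1 P2 k k' :
  tens3 (fun a b => \sum_o P o a b) P1 P2 k k' = \sum_o tens3 (P o) P1 P2 k k'.
Proof. by rewrite /tens3 !mulr_suml; apply: eq_bigr => o _; ring. Qed.

Lemma app_ext (I : finType) (M N : I -> I -> C) v i :
  (forall a b, M a b = N a b) -> app M v i = app N v i.
Proof. by move=> h; apply: eq_bigr => j _; rewrite h. Qed.

Lemma dotv_ext (I : finType) (u u' w w' : I -> C) :
  (forall i, u i = u' i) -> (forall i, w i = w' i) -> dotv u w = dotv u' w'.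
Proof. by move=> h1 h2; apply: eq_bigr => i _; rewrite h1 h2. Qed.

End Tens.

Lemma isproj_idM (I : finType) : isproj (@idM I).
Proof.
split; first by move=> i j; rewrite /idM rmorph_nat eq_sym.
move=> i k; rewrite /mulM /idM (bigD1 i) //= eqxx mul1r big1 ?addr0 // => j.
by rewrite eq_sym => /negbTE ->; rewrite mul0r.
Qed.

Lemma mulM_idMl (I : finType) (M : I -> I -> C) i k : mulM (@idM I) M i k = M i k.
Proof.
rewrite /mulM /idM (bigD1 i) //= eqxx mul1r big1 ?addr0 // => j.
by rewrite eq_sym => /negbTE ->; rewrite mul0r.
Qed.

Lemma mulM_idMr (I : finType) (M : I -> I -> C) i k : mulM M (@idM I) i k = M i k.
Proof.
rewrite /mulM /idM (bigD1 k) //= eqxx mulr1 big1 ?addr0 // => j.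
by move=> /negbTE ->; rewrite mulr0.
Qed.

Lemma dot_proj2 (I : finType) (Y : I -> I -> C) u w :
  isproj Y -> dotv u (app Y w) = dotv (app Y u) (app Y w).
Proof.
move=> hY; rewrite -dot_herm; last by case: hY.
by apply: eq_bigr => i _; rewrite app_idem.
Qed.

Lemma pm_proj (O B : finType) (P : O -> B -> B -> C) o : proj_meas P -> isproj (P o).
Proof. by move=> [h [i _]]; split => //; move=> ??; apply: i. Qed.

Lemma pm_sum (O B : finType) (P : O -> B -> B -> C) a b :
  proj_meas P -> \sum_o P o a b = idM a b.
Proof. by move=> [_ [_ s]]; rewrite s. Qed.

Lemma pm_orth (B : finType) (R : bool -> B -> B -> C) b a c :
  proj_meas R -> mulM (R b) (R (~~ b)) a c = 0.
Proof.
move=> hR.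
have e : forall j, R (~~ b) j c = idM j c - R b j c.
  move=> j; rewrite -(pm_sum j c hR) big_bool; case: b => /=; ring.
rewrite /mulM; under eq_bigr do rewrite e mulrBr.
rewrite sumrB -/(mulM (R b) idM a c) mulM_idMr.
by rewrite -/(mulM (R b) (R b) a c); case: (pm_proj b hR) => _ ->; rewrite subrr.
Qed.

End Gen.
Arguments idM {C I}.

Definition sgI (r a : bool) : int := if a then (-1) ^+ r else 1.
Definition ketI (r a : bool) : int := (a == r)%:Z.
Definition psiI (s r0 r1 : bool) (a : bool * bool) : int :=
  if s then sgI r1 a.1 * ketI r0 a.2 else ketI r0 a.1 * sgI r1 a.2.
Definition bb := [:: (true,true); (true,false); (false,true); (false,false)].
Definition sbb (F : bool * bool -> int) : int := foldr (fun a acc => F a + acc) 0 bb.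
Definition cI (s t : bool) (x y : bool * bool) : int :=
  sbb (fun a => psiI s x.1 x.2 a * psiI t y.1 y.2 a).
Definition mI (b X Y Q1 Q2 s t : bool) (y x : bool * bool) : int :=
  ((if b then y.2 else y.1) (+) Q1 == X)%:Z *
  ((if b then x.1 else x.2) (+) Q2 == Y)%:Z * cI s t x y.
Definition kI (b X Y Q1 Q2 s t : bool) (x x' : bool * bool) : int :=
  sbb (fun y => mI b X Y Q1 Q2 s t y x * mI b X Y Q1 Q2 s t y x').

Definition bools := [:: true; false].

Lemma kI_check :
  all (fun b => all (fun X => all (fun Y => all (fun Q1 => all (fun Q2 =>
  all (fun s => all (fun t => all (fun x => all (fun x' =>
    (x != x') ==> (kI b X Y Q1 Q2 s t x x' == 0)) bb) bb) bools) bools) bools) bools) bools) bools) bools.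
Proof. vm_compute. reflexivity. Qed.

Lemma kI_diag :
  all (fun b => all (fun X => all (fun Y => all (fun Q1 => all (fun Q2 =>
  all (fun s => all (fun t => all (fun x =>
    (kI b X Y Q1 Q2 s t x x <= (if s != t then 2 else 4) *
        ((if b then x.1 else x.2) (+) Q2 == Y)%:Z)%R) bb) bools) bools) bools) bools) bools) bools) bools.
Proof. vm_compute. reflexivity. Qed.

Lemma mem_bools (b : bool) : b \in bools. Proof. by case: b. Qed.
Lemma mem_bb (x : bool * bool) : x \in bb. Proof. by case: x => [[] []]. Qed.

Lemma kI_off b X Y Q1 Q2 s t x x' : x != x' -> kI b X Y Q1 Q2 s t x x' = 0.
Proof.
move=> hx; have := kI_check.
move=> /allP/(_ b (mem_bools b)) /allP/(_ X (mem_bools X)) /allP/(_ Y (mem_bools Y)).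
move=> /allP/(_ Q1 (mem_bools Q1)) /allP/(_ Q2 (mem_bools Q2)) /allP/(_ s (mem_bools s)).
move=> /allP/(_ t (mem_bools t)) /allP/(_ x (mem_bb x)) /allP/(_ x' (mem_bb x')).
by rewrite hx => /eqP.
Qed.

Lemma kI_le b X Y Q1 Q2 s t x :
  (kI b X Y Q1 Q2 s t x x <= (if s != t then 2 else 4) *
        ((if b then x.1 else x.2) (+) Q2 == Y)%:Z)%R.
Proof.
have := kI_diag.
move=> /allP/(_ b (mem_bools b)) /allP/(_ X (mem_bools X)) /allP/(_ Y (mem_bools Y)).
move=> /allP/(_ Q1 (mem_bools Q1)) /allP/(_ Q2 (mem_bools Q2)) /allP/(_ s (mem_bools s)).
by move=> /allP/(_ t (mem_bools t)) /allP/(_ x (mem_bb x)).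
Qed.

Section CC.
Variable C : numClosedFieldType.
Definition hh : C := (sqrtC 2)^-1.
Lemma hh_ge0 : 0 <= hh. Proof. by rewrite invr_ge0 sqrtC_ge0 ler0n. Qed.
Lemma hh_conj : hh^* = hh. Proof. exact: geC0_conj hh_ge0. Qed.
Lemma hh2 : hh * hh = 2^-1.
Proof. by rewrite /hh -invfM -expr2 sqrtCK. Qed.

Lemma psiE s r0 r1 a : psi C s r0 r1 a = hh * (psiI s r0 r1 a)%:~R.
Proof.
case: s r0 r1 a => [] [] [] [[] []];
  rewrite /psi /ket /ket_hat /psiI /sgI /ketI /hh /= ?expr1 ?expr0 ?intrM ?intrN /=; ring.
Qed.


Lemma sum_bbE (F : bool * bool -> C) :
  \sum_(a : bool * bool) F a = F (true,true) + F (true,false) + F (false,true) + F (false,false).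
Proof.
have -> : \sum_(a : bool*bool) F a = \sum_i \sum_j F (i,j).
  by rewrite pair_bigA; apply: eq_bigr => -[].
rewrite !big_bool /=; ring.
Qed.

Lemma sbbE (F : bool * bool -> int) : (sbb F)%:~R = \sum_(a : bool * bool) (F a)%:~R :> C.
Proof. by rewrite sum_bbE /sbb /= !intrD addr0 !addrA. Qed.

Lemma natzR (k : nat) : (k%:Z)%:~R = k%:R :> C. Proof. by []. Qed.

Lemma conj_int (z : int) : (z%:~R : C)^* = z%:~R.
Proof. exact: rmorph_int. Qed.

Definition cC s t (x y : bool * bool) : C :=
  \sum_(a : bool * bool) psi C s x.1 x.2 a * (psi C t y.1 y.2 a)^*.

Lemma cCE s t x y : cC s t x y = 2^-1 * (cI s t x y)%:~R.
Proof.
rewrite /cC /cI sbbE mulr_sumr; apply: eq_bigr => a _.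
rewrite !psiE rmorphM /= hh_conj conj_int intrM -hh2; ring.
Qed.

Definition mC (b X Y Q1 Q2 s t : bool) (y x : bool * bool) : C :=
  ((if b then y.2 else y.1) (+) Q1 == X)%:R *
  ((if b then x.1 else x.2) (+) Q2 == Y)%:R * (cC s t x y)^*.

Lemma mCE b X Y Q1 Q2 s t y x : mC b X Y Q1 Q2 s t y x = 2^-1 * (mI b X Y Q1 Q2 s t y x)%:~R.
Proof.
rewrite /mC /mI cCE rmorphM /= conj_int geC0_conj ?invr_ge0 ?ler0n // !intrM.
by rewrite !natzR; ring.
Qed.

Definition kC (b X Y Q1 Q2 s t : bool) (x x' : bool * bool) : C :=
  \sum_y (mC b X Y Q1 Q2 s t y x)^* * mC b X Y Q1 Q2 s t y x'.

Lemma kCE b X Y Q1 Q2 s t x x' : kC b X Y Q1 Q2 s t x x' = 4^-1 * (kI b X Y Q1 Q2 s t x x')%:~R.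
Proof.
rewrite /kC /kI sbbE mulr_sumr; apply: eq_bigr => y _.
rewrite !mCE rmorphM /= conj_int geC0_conj ?invr_ge0 ?ler0n // intrM.
have -> : (4 : C)^-1 = 2^-1 * 2^-1 by rewrite -invfM -natrM.
ring.
Qed.

Lemma kC_off b X Y Q1 Q2 s t x x' : x != x' -> kC b X Y Q1 Q2 s t x x' = 0.
Proof. by move=> h; rewrite kCE kI_off // mulr0. Qed.

Lemma kC_ge0 b X Y Q1 Q2 s t x : 0 <= kC b X Y Q1 Q2 s t x x.
Proof.
by apply: sumr_ge0 => y _; rewrite -normCKC exprn_ge0.
Qed.

Lemma kC_le b X Y Q1 Q2 s t x :
  kC b X Y Q1 Q2 s t x x <=
  (if s != t then 2^-1 else 1) * ((if b then x.1 else x.2) (+) Q2 == Y)%:R.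
Proof.
rewrite kCE; have := kI_le b X Y Q1 Q2 s t x.
rewrite -(ler_int C) => H.
have H4 : (0 : C) <= 4^-1 by rewrite invr_ge0 ler0n.
apply: le_trans (ler_wpM2l H4 H) _.
rewrite intrM natzR.
case: (s != t) => /=.
  rewrite mulrA; apply: ler_wpM2r; first by rewrite ler0n.
  have -> : (2%:~R : C) = 2 by [].
  have -> : (4 : C)^-1 = 2^-1 * 2^-1 by rewrite -invfM -natrM.
  by rewrite -mulrA mulVf ?pnatr_eq0 // mulr1.
have -> : (4%:~R : C) = 4 by [].
by rewrite mulrA mulVf ?pnatr_eq0 // mul1r.
Qed.

End CC.

Section Main.
Variable C : numClosedFieldType.
Variables (n : nat) (E B0 B1 B2 : finType).
Variable U : (B0 * B1 * B2) -> (Abasis n * E) -> C.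
Variable chi : E -> C.
Variable R : bool -> B2 -> B2 -> C.
Variable Pi0 : bits n -> bits n -> bool -> B0 -> B0 -> C.
Variable Pi1 : bits n -> bits n -> bool -> B1 -> B1 -> C.
Hypothesis Hchi : pure_state chi.
Hypothesis HU : unitary U.
Hypothesis HR : proj_meas R.
Hypothesis HP0 : forall s b, proj_meas (fun e => Pi0 e s b).
Hypothesis HP1 : forall s b, proj_meas (fun e => Pi1 e s b).
Local Notation K := (B0 * B1 * B2)%type.

Definition r0of (rho : Abasis n) : bits n := [ffun j => (rho j).1].
Definition r1of (rho : Abasis n) : bits n := [ffun j => (rho j).2].
Definition rb (rho : Abasis n) (b : bool) : bits n := if b then r1of rho else r0of rho.

Variable q : bits n * bits n.

Definition gam s rho : K -> C := Phi U chi s (r0of rho) (r1of rho).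
Definition Xop s rho b :=
  tens3 (Pi0 (bxor (rb rho b) q.1) s b) (Pi1 (bxor (rb rho (~~ b)) q.2) s b) (R b).
Definition alp s rho b : K -> C := app (Xop s rho b) (gam s rho).
Definition Nn s := \sum_rho \sum_b dotv (alp s rho b) (alp s rho b).

Lemma Xop_proj s rho b : isproj (Xop s rho b).
Proof.
rewrite /Xop; apply: isproj_tens3.
  exact: (pm_proj (bxor (rb rho b) q.1) (HP0 s b)).
  exact: (pm_proj _ (HP1 s b)).
exact: pm_proj HR.
Qed.

Lemma expect3E (v : K -> C) P0 P1 P2 :
  expect3 v P0 P1 P2 = dotv v (app (tens3 P0 P1 P2) v).
Proof.
rewrite /expect3 /dotv /app /tens3; apply: eq_bigr => k _.
by rewrite mulr_sumr; apply: eq_bigr => k' _; rewrite !mulrA.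
Qed.

Lemma sum_rho (F : bits n -> bits n -> C) :
  \sum_r0 \sum_r1 F r0 r1 = \sum_(rho : Abasis n) F (r0of rho) (r1of rho).
Proof.
rewrite pair_bigA /=.
pose g (p : bits n * bits n) : Abasis n := [ffun j => (p.1 j, p.2 j)].
rewrite (reindex (fun rho : Abasis n => (r0of rho, r1of rho))) //=.
exists g.
  by move=> rho _; apply/ffunP => j; rewrite /g !ffunE /= -surjective_pairing.
by move=> [a b] _; congr pair; apply/ffunP => j; rewrite !ffunE.
Qed.

Lemma Nn_ge0 s : 0 <= Nn s.
Proof. by apply: sumr_ge0 => rho _; apply: sumr_ge0 => b _; apply: dotv_ge0. Qed.

Lemma step1 :
  \sum_r0 \sum_r1 \sum_s \sum_b
    expect3 (Phi U chi s r0 r1)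
      (Pi0 (bxor (if b then r1 else r0) q.1) s b)
      (Pi1 (bxor (if b then r0 else r1) q.2) s b) (R b)
  = \sum_s Nn s.
Proof.
rewrite (sum_rho (fun r0 r1 => \sum_s \sum_b expect3 (Phi U chi s r0 r1)
      (Pi0 (bxor (if b then r1 else r0) q.1) s b)
      (Pi1 (bxor (if b then r0 else r1) q.2) s b) (R b))).
rewrite exchange_big /=; apply: eq_bigr => s _.
apply: eq_bigr => rho _; apply: eq_bigr => b _.
rewrite expect3E.
have -> : tens3 (Pi0 (bxor (if b then r1of rho else r0of rho) q.1) s b)
      (Pi1 (bxor (if b then r0of rho else r1of rho) q.2) s b) (R b) = Xop s rho b.
  by rewrite /Xop /rb; case: b.
exact: (dot_proj (gam s rho) (Xop_proj s rho b)).
Qed.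


Definition phi (ak : Abasis n * K) : C := \sum_e U ak.2 (ak.1, e) * chi e.
Definition vv s (ak : Abasis n * K) : C :=
  \sum_rho \sum_b (Psi C s (r0of rho) (r1of rho) ak.1)^* * alp s rho b ak.2.

Lemma dot_phi_v s : dotv phi (vv s) = Nn s.
Proof.
rewrite /Nn.
transitivity (\sum_rho \sum_b dotv (gam s rho) (alp s rho b)); last first.
  apply: eq_bigr => rho _; apply: eq_bigr => b _.
  by rewrite (dot_proj (gam s rho) (Xop_proj s rho b)).
rewrite /dotv sum_pair.
transitivity (\sum_a \sum_k \sum_rho \sum_b (phi (a, k))^* *
      ((Psi C s (r0of rho) (r1of rho) a)^* * alp s rho b k)).
  apply: eq_bigr => a _; apply: eq_bigr => k _.
  by rewrite /vv /= mulr_sumr; apply: eq_bigr => rho _; rewrite mulr_sumr.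
rewrite exchange_big /=.
transitivity (\sum_k \sum_rho \sum_b \sum_a (phi (a, k))^* *
      ((Psi C s (r0of rho) (r1of rho) a)^* * alp s rho b k)).
  apply: eq_bigr => k _; rewrite exchange_big /=; apply: eq_bigr => rho _.
  by rewrite exchange_big.
rewrite exchange_big /=; apply: eq_bigr => rho _.
rewrite exchange_big /=; apply: eq_bigr => b _.
apply: eq_bigr => k _.
set w := alp s rho b k.
rewrite /gam /Phi sum_pair rmorph_sum mulr_suml; apply: eq_bigr => a _.
rewrite /phi /= !rmorph_sum !mulr_suml; apply: eq_bigr => e _.
by rewrite !rmorphM /=; ring.
Qed.

Lemma card_Abasis : #|{: Abasis n}| = (4 ^ n)%N.
Proof. by rewrite card_ffun card_prod card_bool card_ord. Qed.

Lemma dot_phi_phi : dotv phi phi = (4 ^ n)%:R.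
Proof.
case: HU => HU1 _.
rewrite /dotv sum_pair.
transitivity (\sum_(a : Abasis n) \sum_e (chi e)^* * chi e).
  apply: eq_bigr => a _.
  transitivity (\sum_k \sum_e \sum_e' ((U k (a, e))^* * U k (a, e')) * ((chi e)^* * chi e')).
    apply: eq_bigr => k _; rewrite /phi /= rmorph_sum mulr_suml; apply: eq_bigr => e _.
    by rewrite mulr_sumr; apply: eq_bigr => e' _; rewrite rmorphM /=; ring.
  rewrite exchange_big /=; apply: eq_bigr => e _.
  rewrite exchange_big /=.
  rewrite (bigD1 e) //= [X in _ + X]big1 ?addr0.
    by rewrite -mulr_suml HU1 eqxx mul1r.
  move=> e' ne; rewrite -mulr_suml HU1.
  have -> : ((a, e) == (a, e')) = false.
    by apply/negbTE; apply: contra ne => /eqP [->].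
  by rewrite mul0r.
have Hc := Hchi; rewrite /pure_state in Hc.
under eq_bigr do rewrite Hc.
by rewrite sumr_const card_Abasis.
Qed.


Lemma sum3_rot (I J L : finType) (F : I -> J -> L -> C) :
  \sum_i \sum_j \sum_l F i j l = \sum_l \sum_i \sum_j F i j l.
Proof.
under eq_bigr do rewrite exchange_big /=.
by rewrite exchange_big.
Qed.

Definition Cst s t (rho rho' : Abasis n) : C :=
  \sum_a Psi C s (r0of rho) (r1of rho) a * (Psi C t (r0of rho') (r1of rho') a)^*.

Lemma dot_vv s t : dotv (vv s) (vv t) =
  \sum_rho \sum_rho' \sum_b \sum_c Cst s t rho rho' * dotv (alp s rho b) (alp t rho' c).
Proof.
rewrite /dotv sum_pair.
transitivity (\sum_a \sum_k \sum_rho \sum_b \sum_rho' \sum_c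
  (Psi C s (r0of rho) (r1of rho) a * (Psi C t (r0of rho') (r1of rho') a)^*) *
  ((alp s rho b k)^* * alp t rho' c k)).
  apply: eq_bigr => a _; apply: eq_bigr => k _.
  rewrite /vv /= rmorph_sum mulr_suml; apply: eq_bigr => rho _.
  rewrite rmorph_sum mulr_suml; apply: eq_bigr => b _.
  rewrite mulr_sumr; apply: eq_bigr => rho' _.
  rewrite mulr_sumr; apply: eq_bigr => c _.
  by rewrite rmorphM /= conjCK; ring.
rewrite sum3_rot; apply: eq_bigr => rho _.
rewrite sum3_rot [RHS]exchange_big /=; apply: eq_bigr => b _.
rewrite sum3_rot; apply: eq_bigr => rho' _.
rewrite sum3_rot; apply: eq_bigr => c _.
rewrite /Cst big_distrl /=; apply: eq_bigr => a _.
by rewrite big_distrr.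
Qed.

Lemma app_tens3_ext (P0 Q0 : B0 -> B0 -> C) (P1 Q1 : B1 -> B1 -> C) (P2 Q2 : B2 -> B2 -> C) v k :
  (forall a b, P0 a b = Q0 a b) -> (forall a b, P1 a b = Q1 a b) ->
  (forall a b, P2 a b = Q2 a b) ->
  app (tens3 P0 P1 P2) v k = app (tens3 Q0 Q1 Q2) v k.
Proof. by move=> h0 h1 h2; apply: app_ext => a b; rewrite /tens3 h0 h1 h2. Qed.

Lemma alp_orth s t rho rho' b :
  dotv (alp s rho b) (alp t rho' (~~ b)) = 0.
Proof.
rewrite /alp -dot_herm; last by case: (Xop_proj s rho b).
rewrite /dotv big1 // => k _.
rewrite app_app.
rewrite (@app_ext _ _ _ (fun _ _ => 0)); first by rewrite /app big1 ?mulr0 // => i _; rewrite mul0r.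
move=> a c; rewrite /Xop mulM_tens3 /tens3 pm_orth ?mulr0 //.
Qed.

Lemma dot_vv2 s t : dotv (vv s) (vv t) =
  \sum_rho \sum_rho' \sum_b Cst s t rho rho' * dotv (alp s rho b) (alp t rho' b).
Proof.
rewrite dot_vv; apply: eq_bigr => rho _; apply: eq_bigr => rho' _.
apply: eq_bigr => b _; rewrite big_bool.
case: b; rewrite /= ?(alp_orth s t rho rho' true) ?(alp_orth s t rho rho' false) ?mulr0 ?addr0 ?add0r //.
Qed.


Definition xof rho b := bxor (rb rho b) q.1.
Definition yof rho b := bxor (rb rho (~~ b)) q.2.
Definition Yst s t b x y := tens3 (Pi0 x t b) (Pi1 y s b) (@idM C B2).

Lemma Yst_proj s t b x y : isproj (Yst s t b x y).
Proof.
apply: isproj_tens3; first exact: (pm_proj x (HP0 t b)).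
  exact: (pm_proj y (HP1 s b)).
exact: isproj_idM.
Qed.

Lemma app_extv (I : finType) (M : I -> I -> C) v w k :
  (forall i, v i = w i) -> app M v k = app M w k.
Proof. by move=> h; apply: eq_bigr => i _; rewrite h. Qed.

Lemma alp_fix1 s rho b k :
  app (tens3 idM (Pi1 (yof rho b) s b) idM) (alp s rho b) k = alp s rho b k.
Proof.
rewrite /alp app_app; apply: app_ext => a c.
rewrite /Xop mulM_tens3 /tens3 !mulM_idMl.
by case: (pm_proj (yof rho b) (HP1 s b)) => _ ->.
Qed.

Lemma alp_fix0 t rho b k :
  app (tens3 (Pi0 (xof rho b) t b) idM idM) (alp t rho b) k = alp t rho b k.
Proof.
rewrite /alp app_app; apply: app_ext => a c.
rewrite /Xop mulM_tens3 /tens3 !mulM_idMl.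
by case: (pm_proj (xof rho b) (HP0 t b)) => _ ->.
Qed.

Lemma alp_Y s t rho rho' b :
  dotv (alp s rho b) (alp t rho' b) =
  dotv (app (Yst s t b (xof rho' b) (yof rho b)) (alp s rho b))
       (app (Yst s t b (xof rho' b) (yof rho b)) (alp t rho' b)).
Proof.
rewrite -(dot_proj2 _ _ (Yst_proj s t b (xof rho' b) (yof rho b))).
transitivity (dotv (app (tens3 idM (Pi1 (yof rho b) s b) idM) (alp s rho b)) (alp t rho' b)).
  by apply: dotv_ext => k //; rewrite alp_fix1.
rewrite -dot_herm; last first.
  apply: herm_tens3; first by case: (@isproj_idM C B0).
    by case: (pm_proj (yof rho b) (HP1 s b)).
  by case: (@isproj_idM C B2).
apply: dotv_ext => k //.
rewrite (@app_extv _ _ _ (app (tens3 (Pi0 (xof rho' b) t b) idM idM) (alp t rho' b))); last first.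
  by move=> i; rewrite alp_fix0.
rewrite app_app; apply: app_ext => a c.
by rewrite mulM_tens3 /tens3 /Yst mulM_idMl mulM_idMr mulM_idMl.
Qed.


Definition Aa s t b x y rho : K -> C := app (Yst s t b x y) (alp s rho b).
Definition Bb s t b x y rho' : K -> C :=
  fun k => (xof rho' b == x)%:R * app (Yst s t b x y) (alp t rho' b) k.
Definition Mx s t b x y rho' rho : C :=
  ((xof rho' b == x) && (yof rho b == y))%:R * (Cst s t rho rho')^*.
Definition Gg s t b x y rho' k : C := \sum_rho Mx s t b x y rho' rho * Aa s t b x y rho k.

Lemma sum_ind (I : finType) (i0 : I) (G : I -> C) : \sum_i ((i0 == i)%:R * G i) = G i0.
Proof.
rewrite (bigD1 i0) //= eqxx mul1r [X in _ + X]big1 ?addr0 // => i.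
by rewrite eq_sym => /negbTE ->; rewrite mul0r.
Qed.

Lemma dot_vv3 s t : dotv (vv s) (vv t) =
  \sum_b \sum_x \sum_y \sum_rho' \sum_k (Gg s t b x y rho' k)^* * Bb s t b x y rho' k.
Proof.
transitivity (\sum_b \sum_x \sum_y \sum_rho' \sum_rho
   ((xof rho' b == x)%:R * ((yof rho b == y)%:R *
   (Cst s t rho rho' * dotv (Aa s t b x y rho) (app (Yst s t b x y) (alp t rho' b)))))); last first.
  apply: eq_bigr => b _; apply: eq_bigr => x _; apply: eq_bigr => y _.
  apply: eq_bigr => rho' _.
  rewrite /Gg /dotv; under [RHS]eq_bigr do rewrite rmorph_sum mulr_suml.
  rewrite [RHS]exchange_big /=; apply: eq_bigr => rho _.
  rewrite mulr_sumr mulr_sumr mulr_sumr; apply: eq_bigr => k _.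
  rewrite /Mx /Bb !rmorphM /= rmorph_nat conjCK.
  by case: (xof rho' b == x); case: (yof rho b == y); rewrite /= ?mul0r ?mulr0 ?mul1r; ring.
rewrite dot_vv2.
transitivity (\sum_b \sum_rho' \sum_rho \sum_x \sum_y
   ((xof rho' b == x)%:R * ((yof rho b == y)%:R *
   (Cst s t rho rho' * dotv (Aa s t b x y rho) (app (Yst s t b x y) (alp t rho' b)))))); last first.
  apply: eq_bigr => b _.
  under eq_bigr => rho' _ do rewrite exchange_big.
  under eq_bigr => rho' _ do under eq_bigr => x _ do rewrite exchange_big.
  rewrite exchange_big /=; apply: eq_bigr => x _.
  by rewrite exchange_big.
transitivity (\sum_b \sum_rho' \sum_rho
   (Cst s t rho rho' * dotv (alp s rho b) (alp t rho' b))); last first.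
  apply: eq_bigr => b _; apply: eq_bigr => rho' _; apply: eq_bigr => rho _.
  under eq_bigr do rewrite -mulr_sumr.
  rewrite sum_ind sum_ind alp_Y //.
rewrite sum3_rot; apply: eq_bigr => b _.
by rewrite exchange_big.
Qed.


Lemma ind_ffun (f g : bits n) : (f == g)%:R = \prod_j (f j == g j)%:R :> C.
Proof.
have [->|ne] := eqVneq f g.
  by rewrite big1 // => j _; rewrite eqxx.
have : ~~ [forall j, f j == g j].
  by apply: contra ne => /forallP h; apply/eqP/ffunP => j; apply/eqP.
case/forallPn => j /negbTE hj.
by rewrite (bigD1 j) //= hj mul0r.
Qed.

Lemma Psi_prod s rho a :
  Psi C s (r0of rho) (r1of rho) a = \prod_j psi C (s j) (rho j).1 (rho j).2 (a j).
Proof. by rewrite /Psi; apply: eq_bigr => j _; rewrite !ffunE. Qed.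

Lemma Cst_prod s t rho rho' :
  Cst s t rho rho' = \prod_j cC C (s j) (t j) (rho j) (rho' j).
Proof.
rewrite /Cst /cC bigA_distr_bigA /=; apply: eq_bigr => a _.
by rewrite !Psi_prod rmorph_prod -big_split.
Qed.

Lemma xof_j rho b j : xof rho b j = (if b then (rho j).2 else (rho j).1) (+) q.1 j.
Proof. by rewrite /xof /bxor /rb !ffunE; case: b; rewrite !ffunE. Qed.

Lemma yof_j rho b j : yof rho b j = (if b then (rho j).1 else (rho j).2) (+) q.2 j.
Proof. by rewrite /yof /bxor /rb !ffunE; case: b; rewrite /= !ffunE. Qed.

Lemma Mx_prod s t b x y rho' rho :
  Mx s t b x y rho' rho =
  \prod_j mC C b (x j) (y j) (q.1 j) (q.2 j) (s j) (t j) (rho' j) (rho j).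
Proof.
rewrite /Mx /mC big_split big_split /= Cst_prod rmorph_prod /=.
congr (_ * _).
rewrite -mulnb natrM ind_ffun ind_ffun; congr (_ * _); apply: eq_bigr => j _.
  by rewrite xof_j.
by rewrite yof_j.
Qed.

Lemma gram_prod s t b x y rho rho'' :
  \sum_rho' (Mx s t b x y rho' rho)^* * Mx s t b x y rho' rho'' =
  \prod_j kC C b (x j) (y j) (q.1 j) (q.2 j) (s j) (t j) (rho j) (rho'' j).
Proof.
rewrite /kC bigA_distr_bigA /=; apply: eq_bigr => a _.
by rewrite !Mx_prod rmorph_prod -big_split.
Qed.

Lemma gram_off s t b x y rho rho'' : rho != rho'' ->
  \sum_rho' (Mx s t b x y rho' rho)^* * Mx s t b x y rho' rho'' = 0.
Proof.
move=> ne; rewrite gram_prod.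
have : ~~ [forall j, rho j == rho'' j].
  by apply: contra ne => /forallP h; apply/eqP/ffunP => j; apply/eqP.
case/forallPn => j hj.
by rewrite (bigD1 j) //= kC_off // mul0r.
Qed.

Lemma prod_if (s t : bits n) :
  \prod_j (if s j != t j then (2 : C)^-1 else 1) = 2^-1 ^+ hw (bxor s t).
Proof.
rewrite -big_mkcond /= /hw -prodr_const; apply: eq_bigl => j.
by rewrite inE /bxor ffunE; case: (s j); case: (t j).
Qed.

Lemma gram_le s t b x y rho :
  \sum_rho' (Mx s t b x y rho' rho)^* * Mx s t b x y rho' rho <=
  2^-1 ^+ hw (bxor s t) * (yof rho b == y)%:R.
Proof.
rewrite gram_prod -prod_if ind_ffun -big_split /=.
apply: ler_prod => j _; rewrite kC_ge0 /=.
by rewrite yof_j; apply: kC_le.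
Qed.


Lemma CS5 (I1 I2 I3 I4 I5 : finType) (f g : I1 -> I2 -> I3 -> I4 -> I5 -> C) :
  `|\sum_i1 \sum_i2 \sum_i3 \sum_i4 \sum_i5 (f i1 i2 i3 i4 i5)^* * g i1 i2 i3 i4 i5| ^+ 2 <=
  (\sum_i1 \sum_i2 \sum_i3 \sum_i4 \sum_i5 (f i1 i2 i3 i4 i5)^* * f i1 i2 i3 i4 i5) *
  (\sum_i1 \sum_i2 \sum_i3 \sum_i4 \sum_i5 (g i1 i2 i3 i4 i5)^* * g i1 i2 i3 i4 i5).
Proof.
have H := CS (fun p : I1 * I2 * I3 * I4 * I5 => f p.1.1.1.1 p.1.1.1.2 p.1.1.2 p.1.2 p.2)
             (fun p : I1 * I2 * I3 * I4 * I5 => g p.1.1.1.1 p.1.1.1.2 p.1.1.2 p.1.2 p.2).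
by rewrite !sum_pair /= in H.
Qed.

Lemma sumY_y s t b x (w : K -> C) :
  \sum_y dotv (app (Yst s t b x y) w) (app (Yst s t b x y) w) =
  dotv w (app (tens3 (Pi0 x t b) idM idM) w).
Proof.
under eq_bigr do rewrite -(dot_proj w (Yst_proj s t b x _)).
rewrite -dotv_sumr; apply: dotv_ext => k //.
rewrite -app_sumM; apply: app_ext => a c.
rewrite -tens3_sum1 /tens3; congr (_ * _ * _).
exact: (pm_sum _ _ (HP1 s b)).
Qed.

Lemma sumY_x s t b y (w : K -> C) :
  \sum_x dotv (app (Yst s t b x y) w) (app (Yst s t b x y) w) =
  dotv w (app (tens3 idM (Pi1 y s b) idM) w).
Proof.
under eq_bigr do rewrite -(dot_proj w (Yst_proj s t b _ y)).
rewrite -dotv_sumr; apply: dotv_ext => k //.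
rewrite -app_sumM; apply: app_ext => a c.
rewrite -tens3_sum0 /tens3; congr (_ * _ * _).
exact: (pm_sum _ _ (HP0 t b)).
Qed.

Lemma nat_conj_sq (c : bool) : (c%:R : C)^* * c%:R = c%:R.
Proof. by case: c; rewrite /= ?rmorph1 ?rmorph0 ?mul1r ?mul0r. Qed.

Lemma SB_eq s t :
  \sum_b \sum_x \sum_y \sum_rho' \sum_k (Bb s t b x y rho' k)^* * Bb s t b x y rho' k = Nn t.
Proof.
transitivity (\sum_b \sum_x \sum_y \sum_rho' ((xof rho' b == x)%:R *
   dotv (app (Yst s t b x y) (alp t rho' b)) (app (Yst s t b x y) (alp t rho' b)))).
  apply: eq_bigr => b _; apply: eq_bigr => x _; apply: eq_bigr => y _.
  apply: eq_bigr => rho' _; rewrite /dotv mulr_sumr; apply: eq_bigr => k _.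
  have -> : Bb s t b x y rho' k = (xof rho' b == x)%:R * app (Yst s t b x y) (alp t rho' b) k by [].
  rewrite rmorphM /= -[in RHS]nat_conj_sq; ring.
rewrite /Nn [RHS]exchange_big /=; apply: eq_bigr => b _.
rewrite sum3_rot; apply: eq_bigr => rho' _.
under eq_bigr do rewrite -mulr_sumr sumY_y.
rewrite sum_ind; apply: dotv_ext => k //.
by rewrite alp_fix0.
Qed.

Lemma SA_eq s t :
  \sum_b \sum_x \sum_y \sum_rho ((yof rho b == y)%:R *
     dotv (Aa s t b x y rho) (Aa s t b x y rho)) = Nn s.
Proof.
rewrite /Nn [RHS]exchange_big /=; apply: eq_bigr => b _.
rewrite sum3_rot; apply: eq_bigr => rho _.
rewrite exchange_big /=.
under eq_bigr do rewrite -mulr_sumr sumY_x.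
rewrite sum_ind; apply: dotv_ext => k //.
by rewrite alp_fix1.
Qed.

Lemma SG_le s t :
  \sum_b \sum_x \sum_y \sum_rho' \sum_k (Gg s t b x y rho' k)^* * Gg s t b x y rho' k
  <= 2^-1 ^+ hw (bxor s t) * Nn s.
Proof.
rewrite -(SA_eq s t) mulr_sumr.
apply: ler_sum => b _; rewrite mulr_sumr; apply: ler_sum => x _.
rewrite mulr_sumr; apply: ler_sum => y _.
rewrite exchange_big /=.
rewrite (eq_bigr (fun k => \sum_rho (\sum_rho' (Mx s t b x y rho' rho)^* * Mx s t b x y rho' rho) *
                 ((Aa s t b x y rho k)^* * Aa s t b x y rho k))); last first.
  move=> k _; rewrite /Gg.
  apply: (gram_diag (M := Mx s t b x y) (fun rho => Aa s t b x y rho k)).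
  by move=> i i' ne; apply: gram_off.
rewrite exchange_big /= mulr_sumr; apply: ler_sum => rho _.
rewrite /dotv mulr_sumr mulr_sumr; apply: ler_sum => k _.
rewrite [X in _ <= X]mulrA; apply: ler_wpM2r; first exact: sqn_ge0.
exact: gram_le.
Qed.

Lemma core s t :
  `|dotv (vv s) (vv t)| ^+ 2 <= 2^-1 ^+ hw (bxor s t) * Nn s * Nn t.
Proof.
rewrite dot_vv3; apply: le_trans (CS5 _ _) _.
rewrite SB_eq; apply: ler_wpM2r; first exact: Nn_ge0.
exact: SG_le.
Qed.


Lemma amgm (z a b c : C) : 0 <= a -> 0 <= b -> 0 <= c ->
  `|z| ^+ 2 <= c ^+ 2 * a * b -> `|z| <= c * (a + b) / 2.
Proof.
move=> a0 b0 c0 h.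
rewrite -ler_sqr ?nnegrE //; last first.
  by rewrite mulr_ge0 ?invr_ge0 ?ler0n // mulr_ge0 // addr_ge0.
apply: le_trans h _.
rewrite -subr_ge0.
have -> : (c * (a + b) / 2) ^+ 2 - c ^+ 2 * a * b = (c * (a - b) / 2) ^+ 2.
  by field.
apply: real_exprn_even_ge0 => //.
have ra := ger0_real a0; have rb := ger0_real b0; have rc := ger0_real c0.
have r2 : (2:C) \is Num.real by apply: ger0_real; rewrite ler0n.
by rewrite rpredM ?rpredV // rpredM // rpredB.
Qed.

Lemma hw_prod (k : bits n) : hh C ^+ hw k = \prod_j (if k j then hh C else 1).
Proof.
rewrite -big_mkcond /= /hw -prodr_const; apply: eq_bigl => j.
by rewrite inE.
Qed.

Lemma sum_hh (s : bits n) : \sum_t hh C ^+ hw (bxor s t) = (1 + hh C) ^+ n.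
Proof.
have inj : injective (bxor s).
  move=> a b /ffunP h; apply/ffunP => j; have := h j; rewrite !ffunE.
  by case: (s j); case: (a j); case: (b j).
rewrite (reindex_inj inj) /=.
have -> : \sum_t hh C ^+ hw (bxor s (bxor s t)) = \sum_(t : bits n) hh C ^+ hw t.
  apply: eq_bigr => t _; congr (_ ^+ hw _); apply/ffunP => j; rewrite !ffunE.
  by case: (s j); case: (t j).
under eq_bigr do rewrite hw_prod.
rewrite -(bigA_distr_bigA (fun (j : 'I_n) (b : bool) => if b then hh C else 1)) /=.
rewrite big_bool /= prodr_const card_ord; congr (_ ^+ _); ring.
Qed.

Lemma hw_sym (s t : bits n) : hw (bxor s t) = hw (bxor t s).
Proof. by congr hw; apply/ffunP => j; rewrite !ffunE addbC. Qed.

Lemma hh_pow2 d : (hh C ^+ d) ^+ 2 = 2^-1 ^+ d.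
Proof. by rewrite -exprM mulnC exprM expr2 hh2. Qed.

Lemma main_q : \sum_s Nn s <= (4 ^ n)%:R * (1 + hh C) ^+ n.
Proof.
set S := \sum_s Nn s.
have S0 : 0 <= S by apply: sumr_ge0 => s _; apply: Nn_ge0.
set V := fun ak => \sum_s vv s ak.
have eS : dotv phi V = S by rewrite dotv_sumr; apply: eq_bigr => s _; apply: dot_phi_v.
have cs := CS phi V; rewrite -/(dotv phi V) -/(dotv phi phi) -/(dotv V V) eS in cs.
rewrite dot_phi_phi ger0_norm // in cs.
have eV : dotv V V = \sum_s \sum_t dotv (vv s) (vv t).
  by rewrite dotv_suml; apply: eq_bigr => s _; rewrite dotv_sumr.
have bV : dotv V V <= S * (1 + hh C) ^+ n.
  apply: le_trans (real_ler_norm (ger0_real (dotv_ge0 V))) _.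
  rewrite eV; apply: le_trans (ler_norm_sum _ _ _) _.
  apply: (@le_trans _ _ (\sum_s \sum_t hh C ^+ hw (bxor s t) * (Nn s + Nn t) / 2)).
    apply: ler_sum => s _; apply: le_trans (ler_norm_sum _ _ _) _.
    apply: ler_sum => t _; apply: amgm; rewrite ?Nn_ge0 ?exprn_ge0 ?hh_ge0 //.
    by rewrite hh_pow2 core.
  have -> : \sum_s \sum_t hh C ^+ hw (bxor s t) * (Nn s + Nn t) / 2 =
     2^-1 * (\sum_s Nn s * \sum_t hh C ^+ hw (bxor s t)) +
     2^-1 * (\sum_t Nn t * \sum_s hh C ^+ hw (bxor s t)).
    transitivity (\sum_s \sum_t (2^-1 * (Nn s * hh C ^+ hw (bxor s t)) +
                                   2^-1 * (Nn t * hh C ^+ hw (bxor s t)))).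
      by apply: eq_bigr => s _; apply: eq_bigr => t _; ring.
    under eq_bigr do rewrite big_split /=.
    rewrite big_split /=; congr (_ + _).
      rewrite mulr_sumr; apply: eq_bigr => s _.
      by rewrite mulr_sumr mulr_sumr.
    rewrite exchange_big /= mulr_sumr; apply: eq_bigr => t _.
    by rewrite mulr_sumr mulr_sumr.
  have E1 : \sum_s Nn s * \sum_t hh C ^+ hw (bxor s t) = S * (1 + hh C) ^+ n.
    by rewrite /S big_distrl /=; apply: eq_bigr => s _; rewrite sum_hh.
  have E2 : \sum_t Nn t * \sum_s hh C ^+ hw (bxor s t) = S * (1 + hh C) ^+ n.
    rewrite /S big_distrl /=; apply: eq_bigr => t _; rewrite -(sum_hh t).
    by congr (_ * _); apply: eq_bigr => s _; rewrite hw_sym.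
  rewrite E1 E2 le_eqVlt; apply/orP; left; apply/eqP.
  by field.
have : S * S <= S * ((4 ^ n)%:R * (1 + hh C) ^+ n).
  rewrite -expr2; apply: le_trans cs _.
  rewrite mulrCA; apply: ler_wpM2l; first by rewrite ler0n.
  by [].
have [->|Spos] := eqVneq S 0.
  by move=> _; rewrite mulr_ge0 ?ler0n // exprn_ge0 // addr_ge0 ?hh_ge0.
by rewrite ler_pM2l // lt_def Spos S0.
Qed.

End Main.

Unset Implicit Arguments.
Theorem mainTheorem3 (C : numClosedFieldType) (n : nat) (gamma : C)
  (E B0 B1 B' : finType)
  (U : (B0 * B1 * B') -> (Abasis n * E) -> C) (chi : E -> C)
  (R : bool -> B' -> B' -> C)
  (Pi0 : bits n -> bits n -> bool -> B0 -> B0 -> C)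
  (Pi1 : bits n -> bits n -> bool -> B1 -> B1 -> C) :
  (1 <= n)%N -> 0 <= gamma <= 1 ->
  pure_state chi -> unitary U -> proj_meas R ->
  (forall (s : bits n) (b' : bool), proj_meas (fun e => Pi0 e s b')) ->
  (forall (s : bits n) (b' : bool), proj_meas (fun e => Pi1 e s b')) ->
  p_win gamma U chi R Pi0 Pi1
    <= #|Qset n gamma|%:R * (2^-1 + (2 * sqrtC 2)^-1) ^+ n.
Proof.
move=> _ _ Hchi HU HR HP0 HP1.
rewrite /p_win.
under eq_bigr => q _ do rewrite (step1 U chi HR HP0 HP1 q).
apply: (@le_trans _ _ ((2%:R ^+ (3 * n))^-1 *
   \sum_(q in Qset n gamma) ((4 ^ n)%:R * (1 + hh C) ^+ n))).
  apply: ler_wpM2l; first by rewrite invr_ge0 exprn_ge0 ?ler0n.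
  by apply: ler_sum => q _; apply: main_q.
rewrite sumr_const le_eqVlt; apply/orP; left; apply/eqP.
have e : (2^-1 + (2 * sqrtC 2)^-1 : C) = (1 + hh C) / 2.
  rewrite /hh invfM; field.
  by rewrite sqrtC_eq0 pnatr_eq0.
rewrite e exprMn exprVn natrX mulnC exprM.
have -> : (4 : C) = 2 * 2 by rewrite -natrM.
rewrite exprMn -mulr_natl.
field.
by rewrite mulr1 expf_eq0 pnatr_eq0 andbF.
Qed.
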